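(* Let $G_1=(T_1,A_1)$ and $G_2=(T_2,A_2)$ be games such that $T_1,T_2,A_1,A_2$ are at most countable, and suppose $G_2$ is injective in $\mathbf{Games}_{emb}$ with respect to embeddings between finite games. If $G=(T,A)\le G_1$ is a finite game and $f\colon G\to G_2$ is a game embedding, then there is a game embedding $\tilde f\colon G_1\to G_2$ with $\tilde f|_T=f$.
   Context: A game tree is $T\subseteq M^{<\omega}$ (some set $M$) closed under initial segments such that every $t\in T$ has an extension $t^\frown x\in T$; $|t|$ is the length and $t\restriction k$ the initial segment of length $k$. $\mathrm{Run}(T)=\{R\in M^\omega:R\restriction n\in T\ \forall n\}$. A game is $(T,A)$ with $A\subseteq\mathrm{Run}(T)$; it is finite if $\mathrm{Run}(T)$ is finite. For games, $(T,A)\le(T',A')$ means $T\subseteq T'$ and $A=A'\cap\mathrm{Run}(T)$. A chronological map $f\colon T_1\to T_2$ satisfies $|f(t)|=|t|$, $f(t\restriction k)=f(t)\restriction k$, and induces $\bar f$ on runs by $\bar f(R)\restriction n=f(R\restriction n)$. A game embedding $(T_1,A_1)\to(T_2,A_2)$ is an injective chronological $f$ with $\bar f(R)\in A_2\iff R\in A_1$ for all $R\in\mathrm{Run}(T_1)$. $\mathbf{Games}_{emb}$ is the category of games with game embeddings. A game $X$ is injective in $\mathbf{Games}_{emb}$ with respect to embeddings between finite games if for all finite games $C,D$, every game embedding $g\colon C\to D$ and every game embedding $f\colon C\to X$ there is a game embedding $h\colon D\to X$ with $h\circ g=f$. *)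

(* Defs.v *)
From Stdlib Require List.
From mathcomp Require Import all_boot.
Set Implicit Arguments. Unset Strict Implicit. Unset Printing Implicit Defensive.

Section Games.

Definition restr (M : Type) (R : nat -> M) (n : nat) : seq M := mkseq R n.

Definition game_tree (M : Type) (T : seq M -> Prop) : Prop :=
  (forall (t : seq M) (k : nat), T t -> T (take k t)) /\
  (forall t : seq M, T t -> exists x : M, T (rcons t x)).

Definition Run (M : Type) (T : seq M -> Prop) (R : nat -> M) : Prop :=
  forall n : nat, T (restr R n).

Record game (M : Type) := Game { gtree : seq M -> Prop; gwin : (nat -> M) -> Prop }.

Definition is_game (M : Type) (G : game M) : Prop :=
  game_tree (gtree G) /\ (forall R, gwin G R -> Run (gtree G) R).

Definition finite_game (M : Type) (G : game M) : Prop :=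
  exists l : list (nat -> M), forall R, Run (gtree G) R -> List.In R l.

Definition game_le (M : Type) (G G' : game M) : Prop :=
  (forall t, gtree G t -> gtree G' t) /\
  (forall R, gwin G R <-> (gwin G' R /\ Run (gtree G) R)).

(* chronological map T1 -> T2 (only its values on T1 matter) *)
Definition chronological (M1 M2 : Type) (T1 : seq M1 -> Prop) (T2 : seq M2 -> Prop)
  (f : seq M1 -> seq M2) : Prop :=
  forall t, T1 t ->
    [/\ T2 (f t), size (f t) = size t & forall k : nat, f (take k t) = take k (f t)].

Definition induced (M1 M2 : Type) (f : seq M1 -> seq M2) (R : nat -> M1) (R' : nat -> M2)
  : Prop := forall n : nat, restr R' n = f (restr R n).

Definition game_embedding (M1 M2 : Type) (G1 : game M1) (G2 : game M2)
  (f : seq M1 -> seq M2) : Prop :=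
  [/\ chronological (gtree G1) (gtree G2) f,
      (forall s t, gtree G1 s -> gtree G1 t -> f s = f t -> s = t) &
      (forall R R', Run (gtree G1) R -> induced f R R' -> (gwin G2 R' <-> gwin G1 R))].

Definition countable_set (X : Type) (S : X -> Prop) : Prop :=
  exists g : X -> nat, forall x y, S x -> S y -> g x = g y -> x = y.

Definition injective_finite (M : Type) (X : game M) : Prop :=
  forall (MC MD : Type) (C : game MC) (D : game MD)
         (g : seq MC -> seq MD) (f : seq MC -> seq M),
    is_game C -> is_game D -> finite_game C -> finite_game D ->
    game_embedding C D g -> game_embedding C X f ->
    exists h : seq MD -> seq M,
      game_embedding D X h /\ (forall t, gtree C t -> h (g t) = f t).

End Games.

(* Main.v *)
Require Import Defs.
From Stdlib Require Import ClassicalEpsilon FunctionalExtensionality Classical.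
From mathcomp Require Import all_boot zify.
Set Implicit Arguments. Unset Strict Implicit. Unset Printing Implicit Defensive.


Lemma size_restr (M : Type) (R : nat -> M) m : size (restr R m) = m.
Proof. by rewrite /restr size_mkseq. Qed.

Lemma take_restr (M : Type) (R : nat -> M) k m : take k (restr R m) = restr R (minn k m).
Proof. by rewrite /restr /mkseq -map_take take_iota. Qed.

Lemma restrS (M : Type) (R : nat -> M) m : restr R m.+1 = rcons (restr R m) (R m).
Proof. by rewrite /restr mkseqS. Qed.

Lemma restr_pt (M : Type) (A B : nat -> M) m p : restr A m = restr B m -> p < m -> A p = B p.
Proof.
move=> E lt; have := f_equal (fun s => nth (A p) s p) E.
by rewrite /restr !nth_mkseq.
Qed.

Lemma restr_eq (M : Type) (A B : nat -> M) m : (forall p, p < m -> A p = B p) -> restr A m = restr B m.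
Proof.
elim: m => [|m IH] H //. rewrite !restrS IH ?H //. move=> p lt; apply: H; lia.
Qed.

Lemma map_restr (M N : Type) (f : M -> N) (R : nat -> M) m :
  map f (restr R m) = restr (fun p => f (R p)) m.
Proof. by rewrite /restr /mkseq -map_comp. Qed.

Lemma restr_funext (M : Type) (A B : nat -> M) : (forall p, restr A p = restr B p) -> A = B.
Proof.
move=> H; apply: functional_extensionality => p; apply: (@restr_pt _ _ _ p.+1) => //.
Qed.

Lemma restr_le (M : Type) (A B : nat -> M) m k : restr A m = restr B m -> k <= m -> restr A k = restr B k.
Proof.
move=> E le; have := f_equal (take k) E; rewrite !take_restr.
by have -> : minn k m = k by lia.
Qed.


Lemma runcover (M : Type) (R : nat -> M) (L : list (nat -> M)) : forall (Q : nat -> Prop),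
 (forall p q, q <= p -> Q p -> Q q) ->
 (forall p, Q p \/ exists R1, List.In R1 L /\ restr R p = restr R1 p) ->
 (forall p, Q p) \/ List.In R L.
Proof.
elim: L => [|R1 L IH] Q Qd H.
  by left => p; case: (H p) => [//|[R1 [[]]]].
case: (classic (forall p, restr R p = restr R1 p)) => [E|NE].
  by right; left; symmetry; apply: restr_funext.
have [p0 Hp0] := not_all_ex_not _ _ NE.
have Qd' : forall p q, q <= p -> Q (p + p0) -> Q (q + p0).
  move=> p q le; apply: Qd; lia.
have H' : forall p, Q (p + p0) \/ exists R1, List.In R1 L /\ restr R p = restr R1 p.
  move=> p; case: (H (p + p0)) => [?|[R2 [In2 E]]]; first by left.
  case: In2 => [E2|In2].
    by subst R2; exfalso; apply: Hp0; apply: (restr_le E); lia.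
  by right; exists R2; split => //; apply: (restr_le E); lia.
have [A|A] := IH (fun p => Q (p + p0)) Qd' H'.
- by left => p; apply: (Qd (p + p0)); [lia|].
- by right; right.
Qed.

Lemma between (P : nat -> Prop) a b : P a -> ~ P b -> a <= b ->
  exists n, [/\ a <= n, n < b, P n & ~ P n.+1].
Proof.
elim: b => [|b IH] Pa NPb le.
  have E : a = 0 by lia.
  by subst; tauto.
case: (leqP a b) => le'; last first.
  have E : a = b.+1 by lia.
  by subst.
case: (classic (P b)) => Pb.
  by exists b; split => //; lia.
by have [n [? ? ? ?]] := IH Pa Pb le'; exists n; split => //; lia.
Qed.

Lemma least (P : nat -> Prop) c0 : ~ P c0 -> exists c, (forall k, k < c -> P k) /\ ~ P c.
Proof.
elim: c0 {-2}c0 (leqnn c0) => [|c IH] d le Nd.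
  have E : d = 0 by lia.
  by subst; exists 0; split => // k; lia.
case: (classic (forall k, k < d -> P k)) => A; first by exists d.
have [k Hk] := not_all_ex_not _ _ A.
have [lt Nk] : k < d /\ ~ P k by tauto.
by apply: (IH k) => //; lia.
Qed.


Lemma pigeon (X : Type) (A : list X) : forall (K : nat) (F : nat -> X), size A < K ->
  (forall i j, i < K -> j < K -> F i = F j -> i = j) -> exists i, i < K /\ ~ List.In (F i) A.
Proof.
elim: A => [|a A IH] K F sz Finj.
  by exists 0; split => //; lia.
case: (classic (exists i0, i0 < K /\ F i0 = a)) => [[i0 [lt0 E0]]|N].
  pose idx i := if i < i0 then i else i.+1.
  have szK : size A < (K - 1) by move: sz => /= ; lia.
  have injK : forall i j, i < (K - 1) -> j < (K - 1) -> F (idx i) = F (idx j) -> i = j.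
    move=> i j li lj E.
    have lI : idx i < K by rewrite /idx; case: (ltnP i i0) => _; lia.
    have lJ : idx j < K by rewrite /idx; case: (ltnP j i0) => _; lia.
    have := Finj _ _ lI lJ E; rewrite /idx.
    by case: (ltnP i i0); case: (ltnP j i0) => ? ?; lia.
  have [i [lti Ni]] := IH (K - 1) (fun i => F (idx i)) szK injK.
  exists (idx i); split; first by rewrite /idx; case: (ltnP i i0) => _; lia.
  move=> /= [E|]; last by [].
  have : idx i = i0 by apply: Finj; [rewrite /idx; case: (ltnP i i0) => _; lia|done|by rewrite E0].
  by rewrite /idx; case: (ltnP i i0) => h; lia.
have szA : size A < K by move: sz => /=; lia.
have [i [lti Ni]] := IH K F szA Finj.
exists i; split => // [[E|//]]; apply: N; by exists i.
Qed.

Lemma emb_ext (M1 M2 : Type) (A B : game M1) (X : game M2) F :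
  (forall t, gtree A t <-> gtree B t) -> (forall R, gwin A R <-> gwin B R) ->
  game_embedding A X F -> game_embedding B X F.
Proof.
move=> Et Ew [Ch Inj W]; split.
- by move=> t /Et /Ch.
- by move=> s t /Et Hs /Et Ht; apply: Inj.
- move=> R R' RR I; rewrite -Ew; apply: W => // n; apply/Et; exact: RR.
Qed.

Lemma induced_ex (M1 MD : Type) (A : seq M1 -> Prop) (D : seq MD -> Prop) phi (x0 : MD) R :
  chronological A D phi -> Run A R -> induced phi R (fun p => nth x0 (phi (restr R p.+1)) p).
Proof.
move=> Ch RR n.
have [Dn Sn Tn] := Ch _ (RR n).
apply: (eq_from_nth (x0 := x0)); first by rewrite size_restr Sn size_restr.
move=> i; rewrite size_restr => lt.
rewrite /restr nth_mkseq // -/(restr R i.+1).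
have -> : restr R i.+1 = take i.+1 (restr R n) by rewrite take_restr; congr restr; lia.
by rewrite Tn nth_take.
Qed.

Lemma emb_comp (M1 MD M2 : Type) (A : game M1) (D : game MD) (X : game M2) phi h (x0 : MD) :
  game_embedding A D phi -> game_embedding D X h -> game_embedding A X (fun t => h (phi t)).
Proof.
move=> [Ch1 Inj1 W1] [Ch2 Inj2 W2]; split.
- move=> t At; have [Dt St Tt] := Ch1 t At; have [Xt S2 T2] := Ch2 _ Dt.
  split => //; first by rewrite S2.
  by move=> k; rewrite Tt T2.
- move=> s t As At E; have [Ds _ _] := Ch1 s As; have [Dt' _ _] := Ch1 t At.
  by apply: Inj1 => //; exact: Inj2 E.
- move=> R R'' RR I.
  pose R' := fun p => nth x0 (phi (restr R p.+1)) p.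
  have I1 : induced phi R R' := induced_ex x0 Ch1 RR.
  have RR' : Run (gtree D) R' by move=> n; rewrite I1; have [] := Ch1 _ (RR n).
  rewrite (W2 R' R'') //; first exact: W1.
  by move=> n; rewrite I I1.
Qed.

Lemma run_through (M : Type) (T : seq M -> Prop) t : game_tree T -> T t ->
  exists R, Run T R /\ t = restr R (size t).
Proof.
move=> [Tk Te] Tt.
have ex : forall u, exists v, T u -> T v /\ exists x, v = rcons u x.
  move=> u; case: (classic (T u)) => Tu; last by exists u.
  by have [x Hx] := Te u Tu; exists (rcons u x); split => //; exists x.
pose nxt u := proj1_sig (constructive_indefinite_description _ (ex u)).
have nxtP : forall u, T u -> T (nxt u) /\ exists x, nxt u = rcons u x.
  by move=> u; rewrite /nxt; case: constructive_indefinite_description.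
pose nd k := iter k nxt t.
have ndT : forall k, T (nd k) by elim => [|k IH] //=; exact: (nxtP _ IH).1.
have ndS : forall k, size (nd k) = size t + k.
  elim => [|k IH]; first by rewrite addn0.
  have -> : nd k.+1 = nxt (nd k) by [].
  by have [_ [x ->]] := nxtP _ (ndT k); rewrite size_rcons IH addnS.
have ndP : forall a b, a <= b -> exists w, nd b = nd a ++ w.
  move=> a b; elim: b => [|b IH] le.
    have -> : a = 0 by lia.
    by exists [::]; rewrite cats0.
  case: (leqP a b) => le'.
    have [w Ew] := IH le'; have [_ [x Ex]] := nxtP _ (ndT b).
    have -> : nd b.+1 = nxt (nd b) by [].
    by exists (rcons w x); rewrite Ex Ew rcons_cat.
  have -> : a = b.+1 by lia.
  by exists [::]; rewrite cats0.
have [x0 _] : exists x0 : M, True.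
  have := ndS 1; case E: (nd 1) => [|x w].
    by move=> /=; lia.
  by move=> _; exists x.
pose R p := nth x0 (nd p.+1) p.
have key : forall m, restr R m = take m (nd m).
  move=> m; apply: (eq_from_nth (x0 := x0)).
    by rewrite size_restr size_take ndS; case: ltnP => h; lia.
  move=> i; rewrite size_restr => lt; rewrite /restr nth_mkseq // nth_take //.
  have [w Ew] := ndP i.+1 m lt; rewrite /R Ew nth_cat ndS.
  by case: ltnP => h //; lia.
exists R; split.
  by move=> m; rewrite key; apply: Tk.
rewrite key; have [w Ew] := ndP 0 (size t) (leq0n _).
by rewrite Ew /= takel_cat ?take_size.
Qed.


Lemma In_iota x m n : List.In x (iota m n) <-> m <= x < m + n.
Proof.
elim: n m => [|n IH] m /=; first by split => //; lia.
rewrite IH; split; [case => [->|]; lia|].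
move=> h; case: (ltnP m x) => h'; [right; lia|left; lia].
Qed.

Section Main.
Variables (M1 M2 : Type) (G1 : game M1) (G2 : game M2) (G : game M1).
Hypothesis isG : is_game G.
Hypothesis finG : finite_game G.
Variable rho : nat -> option (nat -> M1).

Definition H n (t : seq M1) : Prop :=
  gtree G t \/ exists i, i < n /\ exists R, rho i = Some R /\ t = restr R (size t).

Definition HG n : game M1 := Game (H n) (fun R => gwin G1 R /\ Run (H n) R).

Lemma H_mono n m t : n <= m -> H n t -> H m t.
Proof. move=> le [?|[i [lt ?]]]; [by left|right; exists i; split => //; lia]. Qed.

Lemma H_succ n t : H n.+1 t <-> H n t \/ exists R, rho n = Some R /\ t = restr R (size t).
Proof.
split.
- case=> [?|[i [lt E]]]; first by left; left.
  case: (ltnP i n) => h; first by left; right; exists i.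
  have ei : i = n by lia.
  by subst i; right.
- case=> [[?|[i [lt E]]]|E]; [by left| |].
    by right; exists i; split => //; lia.
  by right; exists n; split.
Qed.

Lemma H_take n t k : H n t -> H n (take k t).
Proof.
have [[Tk _] _] := isG.
case=> [?|[i [lt [R [Ri E]]]]]; first by left; apply: Tk.
right; exists i; split => //; exists R; split => //.
by rewrite E take_restr size_restr.
Qed.

Lemma H_tree n : game_tree (H n).
Proof.
have [[_ Te] _] := isG.
split; first by move=> t k; apply: H_take.
move=> t [Gt|[i [lt [R [Ri E]]]]].
  by have [x Hx] := Te t Gt; exists x; left.
exists (R (size t)); right; exists i; split => //; exists R; split => //.
by rewrite size_rcons E size_restr -restrS.
Qed.

Fixpoint rl n : list (nat -> M1) :=
  match n with 0 => nil | k.+1 => match rho k with Some R => R :: rl k | None => rl k end end.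

Lemma rl_spec n R : List.In R (rl n) <-> exists i, i < n /\ rho i = Some R.
Proof.
elim: n => [|n IH] /=; first by split => // [[i [lt _]]].
case E: (rho n) => [R1|]; split.
- case=> [<-|/IH [i [lt Ei]]]; first by exists n.
  by exists i; split => //; lia.
- move=> [i [lt Ei]]; case: (ltnP i n) => h; first by right; apply/IH; exists i.
  have ei : i = n by lia.
  by subst; left; rewrite E in Ei; case: Ei.
- by move/IH => [i [lt Ei]]; exists i; split => //; lia.
- move=> [i [lt Ei]]; case: (ltnP i n) => h; first by apply/IH; exists i.
  have ei : i = n by lia.
  by subst; rewrite E in Ei.
Qed.

Lemma H_runs n : exists l, forall R, Run (H n) R -> List.In R l.
Proof.
have [lG HlG] := finG.
exists (lG ++ rl n) => R RR.
have h1 : forall p q, q <= p -> gtree G (restr R p) -> gtree G (restr R q).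
  move=> p q le Gp; have [[Tk _] _] := isG.
  by have := Tk _ q Gp; rewrite take_restr; have -> : minn q p = q by lia.
have h2 : forall p, gtree G (restr R p) \/ exists R1, List.In R1 (rl n) /\ restr R p = restr R1 p.
  move=> p; case: (RR p) => [?|[i [lt [R1 [Ri E]]]]]; first by left.
  right; exists R1; split; first by apply/rl_spec; exists i.
  by rewrite E size_restr.
have [A|A] := @runcover _ R (rl n) (fun p => gtree G (restr R p)) h1 h2.
- by apply: List.in_or_app; left; apply: HlG.
- by apply: List.in_or_app; right.
Qed.

Lemma HG_game n : is_game (HG n).
Proof. by split; [exact: H_tree|move=> R []]. Qed.

Lemma HG_fin n : finite_game (HG n).
Proof. exact: H_runs. Qed.

Definition tag0 (x : M1) : M1 * nat := (x, 0).
Definition rc (R0 : nat -> M1) c i p : M1 * nat := (R0 p, if p.+1 < c then 0 else i.+1).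

Definition Dt n R0 c K (u : seq (M1 * nat)) : Prop :=
  (exists s, H n s /\ u = map tag0 s) \/ (exists i, i < K /\ u = restr (rc R0 c i) (size u)).
Definition Dw n R0 c K (R' : nat -> M1 * nat) : Prop :=
  Run (Dt n R0 c K) R' /\
  ((exists R, Run (H n) R /\ gwin G1 R /\ R' = (fun p => tag0 (R p))) \/
   (exists i, i < K /\ R' = rc R0 c i /\ gwin G1 R0)).
Definition DG n R0 c K := Game (Dt n R0 c K) (Dw n R0 c K).

Lemma untag (R' : nat -> M1 * nat) m s : restr R' m = map tag0 s ->
  s = restr (fun q => (R' q).1) m /\ restr (fun q => tag0 (R' q).1) m = restr R' m.
Proof.
move=> E.
have Es : s = map fst (restr R' m).
  by rewrite E; clear; elim: s => //= x s <-.
split; first by rewrite Es map_restr.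
by rewrite -map_restr -map_restr -Es E.
Qed.

Lemma rc_tag R0 c i p : (rc R0 c i p).2 = if p.+1 < c then 0 else i.+1.
Proof. by []. Qed.

Lemma restr_rc_low R0 c i m : m < c -> restr (rc R0 c i) m = map tag0 (restr R0 m).
Proof.
move=> lt; rewrite map_restr; apply: restr_eq => p lp.
by rewrite /rc /tag0; have -> : p.+1 < c by lia.
Qed.

Lemma rc_ne_tag0 R0 c i (R : nat -> M1) : rc R0 c i <> (fun p => tag0 (R p)).
Proof.
move=> E; have := f_equal (fun f => (f c).2) E; rewrite /= /tag0.
by have -> : c.+1 < c = false by lia.
Qed.

Section D.
Variables (n : nat) (R0 : nat -> M1) (c K : nat).
Hypothesis hc : forall k, H n (restr R0 k) <-> k < c.

Lemma D_game : is_game (DG n R0 c K).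
Proof.
split; last by move=> R [].
split.
- move=> u k [[s [Hs ->]]|[i [lt Eu]]].
    by left; exists (take k s); split; [exact: H_take|rewrite map_take].
  right; exists i; split => //; move: (size u) Eu => m ->.
  by rewrite take_restr size_restr.
- move=> u [[s [Hs ->]]|[i [lt Eu]]].
    have [x Hx] := (H_tree n).2 s Hs.
    by exists (tag0 x); left; exists (rcons s x); split => //; rewrite map_rcons.
  exists (rc R0 c i (size u)); right; exists i; split => //.
  by rewrite size_rcons {1}Eu -restrS.
Qed.

Lemma D_fin : finite_game (DG n R0 c K).
Proof.
have [lH HlH] := H_runs n.
exists (map (fun R p => tag0 (R p)) lH ++ map (rc R0 c) (iota 0 K)) => R' RR.
have h1 : forall p q, q <= p -> (exists s, H n s /\ restr R' p = map tag0 s) ->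
    exists s, H n s /\ restr R' q = map tag0 s.
  move=> p q le [s [Hs E]]; exists (take q s); split; first exact: H_take.
  by rewrite map_take -E take_restr; congr restr; lia.
have h2 : forall p, (exists s, H n s /\ restr R' p = map tag0 s) \/
   exists R1, List.In R1 (map (rc R0 c) (iota 0 K)) /\ restr R' p = restr R1 p.
  move=> p; case: (RR p) => [?|[i [lt E]]]; first by left.
  right; exists (rc R0 c i); split; first by apply: List.in_map; apply/In_iota; lia.
  by rewrite E size_restr.
have [A|A] := @runcover _ R' (map (rc R0 c) (iota 0 K))
   (fun p => exists s, H n s /\ restr R' p = map tag0 s) h1 h2.
- apply: List.in_or_app; left.
  have E : R' = (fun p => tag0 (R' p).1).
    apply: restr_funext => p; have [s [_ Es]] := A p; by rewrite (untag Es).2.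
  rewrite E; apply: (List.in_map (fun R p => tag0 (R p))); apply: HlH => p.
  by have [s [Hs Es]] := A p; rewrite -(untag Es).1.
- by apply: List.in_or_app; right.
Qed.

Lemma D_emb0 : game_embedding (HG n) (DG n R0 c K) (map tag0).
Proof.
split.
- move=> t Ht; split; [by left; exists t|by rewrite size_map|by move=> k; rewrite map_take].
- by move=> s t _ _; apply: inj_map => x y [].
- move=> R R' RR I.
  have ER : R' = (fun p => tag0 (R p)) by apply: restr_funext => p; rewrite I map_restr.
  subst R'; split.
  + move=> [_ [[R1 [_ [W1 E1]]]|[i [_ [E _]]]]]; last by have := rc_ne_tag0 (esym E).
    split => //; have -> : R = R1 => //.
    by apply: functional_extensionality => p; have := f_equal (fun f => (f p).1) E1.
  + move=> [W _]; split; last by left; exists R.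
    move=> p; left; exists (restr R p); split => //; exact: RR.
Qed.
End D.


Variable sigma : nat -> option (nat -> M2).
Hypothesis inj2 : injective_finite G2.

Fixpoint avl (c n : nat) : list (seq M2) :=
  let rest := match n with 0 => nil | k.+1 => avl c k end in
  match sigma n with Some Sr => restr Sr c :: rest | None => rest end.

Lemma avl_spec c n j Sr : j <= n -> sigma j = Some Sr -> List.In (restr Sr c) (avl c n).
Proof.
elim: n => [|n IH] le Ej /=.
  have ej : j = 0 by lia.
  by subst j; rewrite Ej; left.
case: (ltnP j n.+1) => h.
  have := IH ltac:(lia) Ej; case: (sigma n.+1) => [Sx|] //; by right.
have ej : j = n.+1 by lia.
by subst j; rewrite Ej; left.
Qed.

Lemma step n F : game_embedding (HG n) G2 F -> exists F',
  game_embedding (HG n.+1) G2 F' /\ (forall t, H n t -> F' t = F t) /\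
  (forall R m j Sr, rho n = Some R -> H n (restr R m) -> ~ H n (restr R m.+1) ->
     j <= n -> sigma j = Some Sr -> F' (restr R m.+1) <> restr Sr m.+1).
Proof.
move=> EF.
have same : (forall t, H n t <-> H n.+1 t) -> game_embedding (HG n.+1) G2 F.
  move=> eqH; apply: (emb_ext _ _ EF) => //= R.
  by split; move=> [W RR]; split => // p; apply/eqH.
case E: (rho n) => [R0|]; last first.
  exists F; split; last by split => // R m j Sr.
  apply: same => t; rewrite H_succ; split; first by left.
  by case => [//|[R [ER _]]]; rewrite E in ER.
case: (classic (Run (H n) R0)) => RR0.
  exists F; split; last first.
    split => // R m j Sr ER _ N; case: ER => ER; subst R.
    by case: N; apply: RR0.
  apply: same => t; rewrite H_succ; split; first by left.
  case => [//|[R [ER ->]]].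
  by rewrite E in ER; case: ER => <-; apply: RR0.
have [q Nq] := not_all_ex_not _ _ RR0.
have [c [Hlow Nc]] := @least (fun k => H n (restr R0 k)) q Nq.
have hc : forall k, H n (restr R0 k) <-> k < c.
  move=> k; split; last by apply: Hlow.
  case: (ltnP k c) => // ge Hk; case: Nc.
  by have := H_take c Hk; rewrite take_restr; have -> : minn c k = c by lia.
pose c' := maxn 1 c.
pose K := (size (avl c' n)).+1.
have [h [Eh Agree]] := inj2 (HG_game n) (D_game n R0 c K) (HG_fin n) (D_fin n R0 c K)
  (D_emb0 n R0 c K) EF.
have Dc : forall i m, i < K -> Dt n R0 c K (restr (rc R0 c i) m).
  by move=> i m lt; right; exists i; split => //; rewrite size_restr.
have Finj : forall i j, i < K -> j < K ->
    h (restr (rc R0 c i) c') = h (restr (rc R0 c j) c') -> i = j.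
  move=> i j li lj E1.
  have [_ Inj _] := Eh.
  have E2 := Inj _ _ (Dc i c' li) (Dc j c' lj) E1.
  have := restr_pt (p := c'.-1) E2 ltac:(rewrite /c'; lia).
  move=> /(f_equal snd); rewrite /= ifF; last by apply/negbTE; rewrite /c'; lia.
  rewrite ifF; last by apply/negbTE; rewrite /c'; lia.
  by case.
have szK : size (avl c' n) < K by rewrite /K.
have [i [lti Ni]] := @pigeon _ (avl c' n) K (fun i => h (restr (rc R0 c i) c')) szK Finj.
pose phi t := if excluded_middle_informative (H n t) then map tag0 t
              else restr (rc R0 c i) (size t).
have phiH : forall t, H n t -> phi t = map tag0 t.
  by move=> t Ht; rewrite /phi; case: excluded_middle_informative.
have phiN : forall t, ~ H n t -> phi t = restr (rc R0 c i) (size t).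
  by move=> t Ht; rewrite /phi; case: excluded_middle_informative.
have phiR : forall m, phi (restr R0 m) = restr (rc R0 c i) m.
  move=> m; case: (classic (H n (restr R0 m))) => Hm.
    by rewrite phiH // restr_rc_low //; apply: (hc m).1.
  by rewrite phiN // size_restr.
have mixed : forall s t, H n s -> ~ H n t -> H n.+1 t -> phi s <> phi t.
  move=> s t Hs Nt H1t; rewrite phiH //.
  case/H_succ: H1t => [//|[R [ER Et]]]; rewrite E in ER; case: ER => ER; subst R.
  rewrite Et phiR => Es.
  have szs : size s = size t by rewrite Et size_restr -(size_map tag0) Es size_restr.
  case: (posnP (size t)) => sz0.
    by move: szs; rewrite sz0 => /size0nil s0; apply: Nt; move/size0nil: sz0 => ->; rewrite -s0.
  have ge : c <= size t by case: (leqP c (size t)) => // lt; case: Nt; rewrite Et; apply/hc.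
  have := f_equal (fun u => (nth (R0 0, 0) u (size t).-1).2) Es.
  rewrite (nth_map (R0 0)) ?szs; last by lia.
  rewrite /restr nth_mkseq; last by lia.
  by rewrite /= ifF //; apply/negbTE; lia.
have Ephi : game_embedding (HG n.+1) (DG n R0 c K) phi.
  split.
  - move=> t /H_succ [Ht|[R [ER Et]]].
      rewrite phiH //; split; [by left; exists t|by rewrite size_map|].
      by move=> k; rewrite phiH ?map_take //; apply: H_take.
    rewrite E in ER; case: ER => ER; subst R.
    rewrite Et phiR; split; [exact: Dc|by rewrite !size_restr|].
    by move=> k; rewrite take_restr phiR take_restr.
  - move=> s t Hs Ht Est.
    case: (classic (H n s)) => Hs'; case: (classic (H n t)) => Ht'.
    + by move: Est; rewrite !phiH //; apply: inj_map => x y [].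
    + by case: (mixed s t Hs' Ht' Ht).
    + by case: (mixed t s Ht' Hs' Hs).
    + case/H_succ: Hs => [//|[R [ER Es]]]; rewrite E in ER; case: ER => ER; subst R.
      case/H_succ: Ht => [//|[R [ER Et]]]; rewrite E in ER; case: ER => ER; subst R.
      move: Est; rewrite Es Et !phiR => E3.
      have := f_equal size E3; rewrite !size_restr => E4.
      by rewrite E4.
  - move=> R R' RR I.
    have h1 : forall p q0, q0 <= p -> H n (restr R p) -> H n (restr R q0).
      move=> p q0 le Hp; have := H_take q0 Hp; rewrite take_restr.
      by have -> : minn q0 p = q0 by lia.
    have h2 : forall p, H n (restr R p) \/ exists R1, List.In R1 [:: R0] /\ restr R p = restr R1 p.
      move=> p; case/H_succ: (RR p) => [?|[R1 [ER E1]]]; first by left.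
      rewrite E in ER; case: ER => ER; subst R1; right; exists R0; split; first by left.
      by rewrite E1 size_restr.
    have [A|[ER|//]] := @runcover _ R [:: R0] (fun p => H n (restr R p)) h1 h2.
    + have I0 : induced (map tag0) R R' by move=> p; rewrite I phiH.
      have [_ _ W0] := D_emb0 n R0 c K.
      have W := W0 R R' A I0.
      split; first by move=> /W [Wg _]; split.
      by move=> [Wg _]; apply/W; split.
    + subst R.
      have ER' : R' = rc R0 c i by apply: restr_funext => p; rewrite I phiR.
      subst R'; split.
      * move=> [_ [[R1 [_ [_ E1]]]|[j [_ [_ W]]]]]; first by have := rc_ne_tag0 E1.
        by split.
      * move=> [W _]; split; first by move=> p; apply: Dc.
        by right; exists i.
exists (fun t => h (phi t)); split; first exact: (emb_comp (R0 0, 0) Ephi Eh).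
split.
  by move=> t Ht; rewrite phiH // Agree.
move=> R m j Sr ER Hm Nm lej ES; case: ER => ER; subst R.
have cm : c = m.+1.
  have := (hc m).1 Hm; have : ~ (m.+1 < c) by move=> /hc.
  lia.
have c'c : c' = c by rewrite /c'; lia.
rewrite phiR -cm => E5; apply: Ni; rewrite c'c E5.
by rewrite -c'c; apply: avl_spec lej ES.
Qed.


Hypothesis le : game_le G G1.
Hypothesis rhoRun : forall k R, rho k = Some R -> Run (gtree G1) R.
Hypothesis rhoNode : forall t, gtree G1 t -> exists k R, rho k = Some R /\ t = restr R (size t).
Hypothesis rhoWin : forall R, gwin G1 R -> exists k, rho k = Some R.
Hypothesis sigWin : forall Sr, gwin G2 Sr -> exists j, sigma j = Some Sr.

Lemma HT1 n t : H n t -> gtree G1 t.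
Proof.
case=> [?|[i [_ [R [Ri ->]]]]]; first by apply: le.1.
exact: rhoRun Ri _.
Qed.

Lemma T1H t : gtree G1 t -> exists n, H n t.
Proof.
move=> /rhoNode [k [R [Rk E]]]; exists k.+1; right; exists k; split => //.
by exists R.
Qed.

Lemma limit f : game_embedding G G2 f ->
  exists ft, game_embedding G1 G2 ft /\ (forall t, gtree G t -> ft t = f t).
Proof.
move=> Ef.
have H0 : forall t, gtree G t <-> H 0 t.
  by move=> t; split; [left|case => // [[i [//]]]].
have E0 : game_embedding (HG 0) G2 f.
  apply: (emb_ext _ _ Ef) => //= R; rewrite le.2.
  by split; move=> [W RR]; split => // p; apply/H0.
have stepc : forall n F, exists F', game_embedding (HG n) G2 F ->
  game_embedding (HG n.+1) G2 F' /\ (forall t, H n t -> F' t = F t) /\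
  (forall R m j Sr, rho n = Some R -> H n (restr R m) -> ~ H n (restr R m.+1) ->
     j <= n -> sigma j = Some Sr -> F' (restr R m.+1) <> restr Sr m.+1).
  move=> n F; case: (classic (game_embedding (HG n) G2 F)) => EF.
    by have [F' P] := step EF; exists F'.
  by exists F.
pose nx n F := proj1_sig (constructive_indefinite_description _ (stepc n F)).
have nxP : forall n F, game_embedding (HG n) G2 F ->
  game_embedding (HG n.+1) G2 (nx n F) /\ (forall t, H n t -> nx n F t = F t) /\
  (forall R m j Sr, rho n = Some R -> H n (restr R m) -> ~ H n (restr R m.+1) ->
     j <= n -> sigma j = Some Sr -> nx n F (restr R m.+1) <> restr Sr m.+1).
  by move=> n F; rewrite /nx; case: constructive_indefinite_description.
pose Fs := fix Fs n := match n with 0 => f | k.+1 => nx k (Fs k) end.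
have FsE : forall n, game_embedding (HG n) G2 (Fs n).
  by elim => [|n IH] //=; exact: (nxP _ _ IH).1.
have FsM : forall n m t, n <= m -> H n t -> Fs m t = Fs n t.
  move=> n m t; elim: m => [|m IH] le0 Ht.
    have e : n = 0 by lia.
    by subst.
  case: (leqP n m) => lnm.
    rewrite -IH //; exact: (nxP _ _ (FsE m)).2.1 _ (H_mono lnm Ht).
  have e : n = m.+1 by lia.
  by subst.
pose ft t := Fs (epsilon (inhabits 0) (fun n => H n t)) t.
have ftE : forall n t, H n t -> ft t = Fs n t.
  move=> n t Ht; rewrite /ft.
  have He : H (epsilon (inhabits 0) (fun n => H n t)) t.
    by apply: (epsilon_spec (inhabits 0) (fun n => H n t)); exists n.
  move: He; set e := epsilon _ _ => He.
  by rewrite -(FsM e (maxn n e)) ?(FsM n (maxn n e)) //; lia.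
exists ft; split; last by move=> t /H0 Ht; rewrite (ftE 0).
split.
- move=> t /T1H [n Ht]; have [Ch _ _] := FsE n; have [X Sz Tk] := Ch t Ht.
  rewrite (ftE n) //; split => // k; rewrite (ftE n) ?Tk //; exact: H_take.
- move=> s t /T1H [n1 Hs] /T1H [n2 Ht].
  have Hs' := H_mono (leq_maxl n1 n2) Hs; have Ht' := H_mono (leq_maxr n1 n2) Ht.
  rewrite (ftE _ _ Hs') (ftE _ _ Ht'); have [_ Inj _] := FsE (maxn n1 n2).
  exact: Inj.
- move=> R R' RR I.
  case: (classic (exists n, Run (H n) R)) => [[n Rn]|N].
    have In : induced (Fs n) R R' by move=> p; rewrite I (ftE n).
    have [_ _ W] := FsE n; rewrite (W R R' Rn In) /=.
    by split => [[]|] //.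
  have NW1 : ~ gwin G1 R.
    move=> /rhoWin [k Rk]; apply: N; exists k.+1 => p; right; exists k; split => //.
    by exists R; rewrite size_restr.
  split => // W2; exfalso.
  have [j Sj] := sigWin W2.
  have [N0 H0R] := T1H (RR 0).
  pose Nn := maxn N0 j.
  have [q Nq] : exists q, ~ H Nn (restr R q).
    by apply: not_all_ex_not => A; apply: N; exists Nn.
  have HN0 : H Nn (restr R 0) by apply: H_mono H0R; lia.
  have [m [_ _ Hm Nm]] := @between (fun k => H Nn (restr R k)) 0 q HN0 Nq (leq0n _).
  have [N2 HN2] := T1H (RR m.+1).
  have leN : Nn <= N2.
    by case: (leqP Nn N2) => // lt; case: Nm; apply: H_mono HN2; lia.
  have [n [len _ Nn1 Hn1]] := @between (fun k => ~ H k (restr R m.+1)) Nn N2 Nm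
     ltac:(by move=> /(_ HN2)) leN.
  have Hn1' : H n.+1 (restr R m.+1) by apply: NNPP.
  case/H_succ: Hn1' => [//|[R0 [R0n E0']]].
  rewrite size_restr in E0'.
  have Hm0 : H n (restr R0 m).
    have -> : restr R0 m = restr R m by apply: (restr_le (esym E0')).
    by apply: H_mono Hm; lia.
  have := (nxP _ _ (FsE n)).2.2 R0 m j R' R0n Hm0 ltac:(by rewrite -E0') ltac:(lia) Sj.
  apply; rewrite -E0' I (ftE n.+1) //.
  by apply: NNPP.
Qed.

End Main.

Unset Implicit Arguments.
Set Strict Implicit.


Theorem mainTheorem4 (M1 M2 : Type) (G1 : game M1) (G2 : game M2) :
  is_game G1 -> is_game G2 ->
  countable_set (gtree G1) -> countable_set (gtree G2) ->
  countable_set (gwin G1) -> countable_set (gwin G2) ->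
  injective_finite G2 ->
  forall (G : game M1) (f : seq M1 -> seq M2),
    is_game G -> game_le G G1 -> finite_game G -> game_embedding G G2 f ->
    exists ft : seq M1 -> seq M2,
      game_embedding G1 G2 ft /\ (forall t, gtree G t -> ft t = f t).
Proof.
move=> isG1 _ [gT HgT] _ [gA HgA] [gA2 HgA2] inj2 G f isG le finG Ef.
have exr : forall n, exists o : option (nat -> M1),
   (~~ odd n -> forall t, gtree G1 t -> gT t = n./2 -> exists R, o = Some R /\ t = restr R (size t)) /\
   (odd n -> forall R, gwin G1 R -> gA R = n./2 -> o = Some R).
  move=> n; case On: (odd n).
    case: (classic (exists R, gwin G1 R /\ gA R = n./2)) => [[R [WR ER]]|NR].
      exists (Some R); split => // _ R' W' E'.
      by congr Some; apply: HgA => //; rewrite ER E'.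
    exists None; split => // _ R W E; case: NR; by exists R.
  case: (classic (exists t, gtree G1 t /\ gT t = n./2)) => [[t [Tt Et]]|NT].
    have [R [_ ER]] := run_through isG1.1 Tt.
    exists (Some R); split => // _ t' T' E'.
    have -> : t' = t by apply: HgT => //; rewrite Et E'.
    by exists R.
  exists None; split => // _ t T E; case: NT; by exists t.
pose rho n := proj1_sig (constructive_indefinite_description _ (exr n)).
have rhoP : forall n, (~~ odd n -> forall t, gtree G1 t -> gT t = n./2 ->
      exists R, rho n = Some R /\ t = restr R (size t)) /\
   (odd n -> forall R, gwin G1 R -> gA R = n./2 -> rho n = Some R).
  by move=> n; rewrite /rho; case: constructive_indefinite_description.
have exs : forall j, exists o : option (nat -> M2),
   forall Sr, gwin G2 Sr -> gA2 Sr = j -> o = Some Sr.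
  move=> j; case: (classic (exists Sr, gwin G2 Sr /\ gA2 Sr = j)) => [[Sr [WS ES]]|NS].
    exists (Some Sr) => S' W' E'.
    by congr Some; apply: HgA2 => //; rewrite ES E'.
  by exists None => Sr W E; case: NS; exists Sr.
pose sigma j := proj1_sig (constructive_indefinite_description _ (exs j)).
have sigP : forall j Sr, gwin G2 Sr -> gA2 Sr = j -> sigma j = Some Sr.
  by move=> j; rewrite /sigma; case: constructive_indefinite_description.
apply: (@limit _ _ G1 G2 G isG finG rho sigma inj2 le) => //.
- move=> t Tt; exists (gT t).*2.
  have [A _] := rhoP (gT t).*2.
  by apply: A => //; rewrite ?odd_double ?half_double.
- move=> R W; exists (gA R).*2.+1.
  have [_ A] := rhoP (gA R).*2.+1.
  by apply: A => //=; rewrite ?odd_double ?uphalf_double.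
- by move=> Sr W; exists (gA2 Sr); apply: sigP.
Qed.
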